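(* Let $R$ be a commutative ring which is free as an abelian group with $\mathbb{Z}$-basis $V$, let $n\ge2$, $p$ a prime, and let $\mathfrak{g}=\mathfrak{sl}_n(\mathbb{F}_p[V])$. Then the first Lie algebra homology of $\mathrm{gr}_*(\Gamma(SL_n(R),p))$ is $$H_1(\mathrm{gr}_*(\Gamma(SL_n(R),p)))=(\mathfrak{g}\otimes_{\mathbb{F}_p}\langle t\rangle)\oplus\Big(\bigoplus_{i\ge2}H_1(\mathfrak{g})\otimes_{\mathbb{F}_p}\langle t^i\rangle\Big),$$ where $\langle t^i\rangle$ is the one-dimensional $\mathbb{F}_p$-span of $t^i$.
   Context: $\mathbb{F}_p[V]=R\otimes_{\mathbb{Z}}\mathbb{Z}/p=R/pR$; $\mathfrak{sl}_n(\mathbb{F}_p[V])$ is the Lie algebra of traceless $n\times n$ matrices over $R/pR$ with bracket $AB-BA$. For a Lie algebra $\mathfrak{h}$ over $\mathbb{F}_p$, $H_1(\mathfrak{h})=\mathfrak{h}/[\mathfrak{h},\mathfrak{h}]$. $\Gamma_r=\Gamma(SL_n(R),p^r)=\ker(SL_n(R)\to SL_n(R/p^rR))$, and $\mathrm{gr}_*(\Gamma(SL_n(R),p))=\bigoplus_{r\ge1}\Gamma_r/\Gamma_{r+1}$ (each summand an $\mathbb{F}_p$-vector space) with Lie bracket induced bilinearly by the group commutator $g^{-1}h^{-1}gh$, which maps $\Gamma_r/\Gamma_{r+1}\times\Gamma_s/\Gamma_{s+1}\to\Gamma_{r+s}/\Gamma_{r+s+1}$. *)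

(* Defs.v *)
From HB Require Import structures.
From mathcomp Require Import all_boot all_order all_algebra.
Unset Printing Implicit Defensive.
Import GRing.Theory.
Local Open Scope ring_scope.

Definition Zbasis {R : pzRingType} (V : R -> Prop) : Prop :=
  (forall x : R, exists (s : seq R) (c : R -> int),
      (forall v, v \in s -> V v) /\ x = \sum_(v <- s) v *~ c v) /\
  (forall (s : seq R) (c : R -> int), uniq s -> (forall v, v \in s -> V v) ->
      \sum_(v <- s) v *~ c v = 0 -> forall v, v \in s -> c v = 0).

(* Gamma_r = Gamma(SL_n(R), p^r) = ker(SL_n(R) -> SL_n(R/p^r R)). *)
Definition Gamma {R : comPzRingType} (n p r : nat) (A : 'M[R]_n) : Prop :=
  \det A = 1 /\ exists B : 'M[R]_n, A = 1%:M + ((p ^ r)%N)%:R *: B.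

(* group commutator g^-1 h^-1 g h in SL_n(R); the inverse of a determinant-1
   matrix is its adjugate. *)
Definition mxcomm {R : comPzRingType} (n : nat) (g h : 'M[R]_n) : 'M[R]_n :=
  \adj g *m \adj h *m g *m h.

Inductive gen_subgroup {R : comPzRingType} (n : nat) (X : 'M[R]_n -> Prop)
  : 'M[R]_n -> Prop :=
| gs_gen A : X A -> gen_subgroup n X A
| gs_one : gen_subgroup n X 1%:M
| gs_mul A B : gen_subgroup n X A -> gen_subgroup n X B -> gen_subgroup n X (A *m B)
| gs_inv A : gen_subgroup n X A -> gen_subgroup n X (\adj A).

(* Preimage in Gamma_r of the degree-r part of [gr, gr]: the subgroup generated
   by Gamma_{r+1} and the commutators [g,h], g in Gamma_s, h in Gamma_{r-s},
   1 <= s <= r-1.  Hence the degree-r part of H_1(gr) is Gamma_r / Ncomm r. *)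
Definition Ncomm {R : comPzRingType} (n p r : nat) : 'M[R]_n -> Prop :=
  gen_subgroup n (fun A => Gamma n p r.+1 A \/
     exists (s : nat) (g h : 'M[R]_n),
       [/\ (1 <= s)%N, (s < r)%N, Gamma n p s g, Gamma n p (r - s) h
         & A = mxcomm n g h]).

(* phi induces an isomorphism of groups Gamma_r / Ncomm r  ~=  {y in M | T y}
   (T an additive subgroup of the zmodType M):
   phi is a homomorphism Gamma_r -> T, onto T, with kernel Ncomm r. *)
Definition gr_H1_piece_iso {R : comPzRingType} (n p r : nat)
  (M : zmodType) (T : M -> Prop) (phi : 'M[R]_n -> M) : Prop :=
  [/\ forall x, Gamma n p r x -> T (phi x),
      forall x y, Gamma n p r x -> Gamma n p r y -> phi (x *m y) = phi x + phi y,
      forall y, T y -> exists x, Gamma n p r x /\ phi x = y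
    & forall x, Gamma n p r x -> (phi x = 0 <-> Ncomm n p r x)].

Definition sl {S : comPzRingType} (n : nat) (A : 'M[S]_n) : Prop := \tr A = 0.

(* [g,g] for g = sl_n(S): additive span (= F_p-span in characteristic p)
   of the brackets XY - YX, X, Y in sl_n(S). *)
Inductive bracket_span {S : comPzRingType} (n : nat) : 'M[S]_n -> Prop :=
| bs_gen X Y : sl n X -> sl n Y -> bracket_span n (X *m Y - Y *m X)
| bs_zero : bracket_span n 0
| bs_add A B : bracket_span n A -> bracket_span n B -> bracket_span n (A + B)
| bs_opp A : bracket_span n A -> bracket_span n (- A).

(* q : sl_n(S) -> Q presents Q as H_1(sl_n(S)) = sl_n(S)/[sl_n(S), sl_n(S)]:
   q is additive on sl_n(S), onto Q, with kernel [g,g]. *)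
Definition H1_sl_presentation {S : comPzRingType} (n : nat)
  (Q : zmodType) (q : 'M[S]_n -> Q) : Prop :=
  [/\ forall A B, sl n A -> sl n B -> q (A + B) = q A + q B,
      forall y, exists A, sl n A /\ q A = y
    & forall A, sl n A -> (q A = 0 <-> bracket_span n A)].

(* Main.v *)
From HB Require Import structures.
From mathcomp Require Import all_boot all_order all_algebra all_fingroup.
From mathcomp Require Import ring.
Require Import Defs.
Import GRing.Theory.
Local Open Scope ring_scope.
From Stdlib Require Import ClassicalEpsilon.
Lemma prod1a (R : comPzRingType) (I : Type) (r : seq I) (a : R) (F : I -> R) :
  exists y, \prod_(i <- r) (1 + a * F i) = 1 + a * \sum_(i <- r) F i + a * a * y.
Proof.
elim: r => [|x r [y IH]]; first by exists 0; rewrite !big_nil; ring.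
exists (F x * \sum_(i <- r) F i + y + a * F x * y).
rewrite !big_cons IH; ring.
Qed.

Lemma entry_off (R : comPzRingType) (n : nat) (a : R) (B : 'M[R]_n) k l :
  k != l -> (1%:M + a *: B) k l = a * B k l.
Proof. by move=> h; rewrite !mxE (negbTE h) add0r. Qed.

Lemma det_expand (R : comPzRingType) (n : nat) (a : R) (B : 'M[R]_n) :
  exists y, \det (1%:M + a *: B) = 1 + a * \tr B + a * a * y.
Proof.
rewrite /determinant (bigD1 1%g) //=.
have [y Hy] := @prod1a R _ (index_enum 'I_n) a (fun i => B i i).
have [z Hz] : exists z, \sum_(s : 'S_n | s != 1%g) (-1) ^+ s *
     \prod_i (1%:M + a *: B) i (s i) = a * a * z.
  apply: (big_ind (fun x => exists y, x = a * a * y)).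
  - by exists 0; ring.
  - by move=> x1 x2 [y1 ->] [y2 ->]; exists (y1 + y2); ring.
  move=> s hs.
  have [i hi] : exists i, s i != i.
    apply/existsP; apply: contraR hs => /existsPn H.
    by apply/eqP/permP => i; rewrite perm1; apply/eqP; rewrite -[_ == _]negbK H.
  have hsj : s (s i) != s i.
    by apply: contra hi => /eqP E; apply/eqP; apply: (@perm_inj _ s).
  rewrite (bigD1 i) //= (bigD1 (s i)) /=; last by rewrite hi.
  rewrite eq_sym in hi; rewrite eq_sym in hsj.
  rewrite (@entry_off _ _ a B _ _ hi) (@entry_off _ _ a B _ _ hsj).
  move: ((-1) ^+ s) (\prod_(k | (k != i) && (k != s i)) (1%:M + a *: B) k (s k)) => u v.
  move: (B i (s i)) (B (s i) (s (s i))) => b1 b2.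
  by exists (u * b1 * b2 * v); ring.
exists (y + z).
rewrite Hz odd_perm1 expr0 mul1r.
have -> : \prod_i (1%:M + a *: B) i ((1%g : 'S_n) i) = \prod_i (1 + a * B i i).
  by apply: eq_bigr => i _; rewrite perm1 !mxE eqxx.
rewrite Hy /mxtrace; move: (\sum_i B i i) => t; ring.
Qed.

Lemma iterop_add (M : zmodType) (k : nat) (y : M) : iterop k +%R y 0 = y *+ k.
Proof.
case: k => [|k] //; rewrite iteropS.

Qed.

Lemma torsion_free (R : pzRingType) (V : R -> Prop) (m : nat) (x : R) :
  Zbasis V -> (0 < m)%N -> x *+ m = 0 -> x = 0.
Proof.
move=> [H1 H2] m0 hx.
have [s [c [hV hxs]]] := H1 x.
set c' := fun v => c v * (count_mem v s)%:Z.
have E : \sum_(v <- s) v *~ c v = \sum_(v <- undup s) v *~ c' v.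
  rewrite -big_undup_iterop_count; apply: eq_bigr => v _.
  by rewrite iterop_add /c' mulrzA.
rewrite hxs E in hx *.
have Z : forall v, v \in undup s -> c' v * m%:Z = 0.
  apply: (H2 (undup s) (fun v => c' v * m%:Z)).
  - exact: undup_uniq.
  - by move=> v; rewrite mem_undup; apply: hV.
  apply: etrans hx; rewrite -sumrMnl; apply: eq_bigr => v _.
  by rewrite mulrzA.
rewrite big_seq big1 // => v hv.
have := Z v hv; move/eqP; rewrite mulf_eq0 => /orP [/eqP -> |]; first by rewrite mulr0z.
by move/eqP=> [] m0'; rewrite m0' in m0.
Qed.

Lemma mul_1a (R : comPzRingType) n (a : R) (X Y : 'M[R]_n) :
  (1%:M + a *: X) *m (1%:M + a *: Y) = 1%:M + a *: (X + Y + a *: (X *m Y)).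
Proof.
rewrite mulmxDl !mulmxDr !mul1mx !mulmx1 -!scalemxAl -!scalemxAr !scalerDr !scalerA.
by rewrite -!addrA; congr (_ + _); rewrite addrCA.
Qed.

Lemma sc_mul (R : pzRingType) (p s t : nat) :
  ((p ^ s)%N%:R : R) * ((p ^ t)%N)%:R = ((p ^ (s + t))%N)%:R.
Proof. by rewrite -natrM expnD. Qed.

Definition TF (R : pzRingType) :=
  forall (m : nat) (x : R), (0 < m)%N -> x *+ m = 0 -> x = 0.

Definition getB (R : comPzRingType) n p k {A : 'M[R]_n} : 'M[R]_n :=
  epsilon (inhabits 0) (fun B => A = 1%:M + ((p ^ k)%N)%:R *: B).
Arguments getB {R} n p k A.

Lemma scale_inj {R : comPzRingType} {n p k} (tf : TF R) (p0 : (0 < p)%N)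
  (B1 B2 : 'M[R]_n) :
  ((p ^ k)%N)%:R *: B1 = ((p ^ k)%N)%:R *: B2 -> B1 = B2.
Proof.
move=> h; apply/matrixP => i j.
have := congr1 (fun M : 'M[R]_n => M i j) h; rewrite !mxE => e.
apply/eqP; rewrite -subr_eq0; apply/eqP; apply: (tf (p ^ k)%N).
  by rewrite expn_gt0 p0.
by rewrite -mulr_natl mulrBr e subrr.
Qed.

Lemma getB_eq {R : comPzRingType} {n p k} (tf : TF R) (p0 : (0 < p)%N)
  {A B : 'M[R]_n} : A = 1%:M + ((p ^ k)%N)%:R *: B -> getB n p k A = B.
Proof.
move=> h.
have e := epsilon_spec (inhabits 0) (fun B => A = 1%:M + ((p ^ k)%N)%:R *: B)
  (ex_intro _ B h).
rewrite -/(getB n p k A) in e.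
have e2 : 1%:M + ((p ^ k)%N)%:R *: B = 1%:M + ((p ^ k)%N)%:R *: getB n p k A.
  by rewrite -h.
by symmetry; apply: scale_inj tf p0 _ _ (addrI _ e2).
Qed.

Definition psi {R S : comPzRingType} (pi : {rmorphism R -> S}) n p k
  (A : 'M[R]_n) : 'M[S]_n := map_mx pi (getB n p k A).

Lemma psiE {R S : comPzRingType} (pi : {rmorphism R -> S}) {n p k}
  (tf : TF R) (p0 : (0 < p)%N) {A B : 'M[R]_n} :
  A = 1%:M + ((p ^ k)%N)%:R *: B -> psi pi n p k A = map_mx pi B.
Proof. by move=> h; rewrite /psi (getB_eq tf p0 h). Qed.

Lemma pisc {R S : comPzRingType} (pi : {rmorphism R -> S}) p k :
  (p%:R : S) = 0 -> (0 < k)%N -> pi ((p ^ k)%N)%:R = 0.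
Proof. by move=> hp k0; rewrite rmorph_nat natrX hp expr0n; case: k k0. Qed.

Lemma G1 {R : comPzRingType} n p k : Gamma n p k (1%:M : 'M[R]_n).
Proof. by split; [rewrite det1 | exists 0; rewrite scaler0 addr0]. Qed.

Lemma Gmul {R : comPzRingType} {n p k} {A B : 'M[R]_n} :
  Gamma n p k A -> Gamma n p k B -> Gamma n p k (A *m B).
Proof.
move=> [dA [X eA]] [dB [Y eB]]; split.
  by rewrite det_mulmx dA dB mulr1.
by rewrite eA eB mul_1a; eexists.
Qed.

Lemma adjE {R : comPzRingType} {n} {a : R} {A X : 'M[R]_n} :
  \det A = 1 -> A = 1%:M + a *: X -> \adj A = 1%:M + a *: (- (\adj A *m X)).
Proof.
move=> dA eA.
have := mul_adj_mx A; rewrite dA {2}eA mulmxDr mulmx1 -scalemxAr => e.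
by rewrite scalerN -e addrK.
Qed.

Lemma det_adj1 {R : comPzRingType} {n} {A : 'M[R]_n} : \det A = 1 -> \det (\adj A) = 1.
Proof.
move=> dA; have := congr1 determinant (mul_mx_adj A).
by rewrite det_mulmx dA mul1r => ->; rewrite det1.
Qed.

Lemma Gadj {R : comPzRingType} {n p k} {A : 'M[R]_n} :
  Gamma n p k A -> Gamma n p k (\adj A).
Proof.
move=> [dA [X eA]]; split; first exact: det_adj1.
by rewrite (adjE dA eA); eexists.
Qed.

Lemma GS {R : comPzRingType} {n p k} {A : 'M[R]_n} :
  Gamma n p k.+1 A -> Gamma n p k A.
Proof.
move=> [dA [X eA]]; split => //; exists (p%:R *: X).
by rewrite eA scalerA -natrM expnS mulnC.
Qed.

Lemma GSE {R : comPzRingType} {n p k} {A X : 'M[R]_n} :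
  A = 1%:M + ((p ^ k.+1)%N)%:R *: X -> A = 1%:M + ((p ^ k)%N)%:R *: (p%:R *: X).
Proof. by move=> ->; rewrite scalerA -natrM expnS mulnC. Qed.


Lemma psi1 {R S : comPzRingType} (pi : {rmorphism R -> S}) {n p k}
  (tf : TF R) (p0 : (0 < p)%N) : psi pi n p k 1%:M = 0.
Proof.
by rewrite (psiE pi tf p0 (B := 0)) ?map_mx0 // scaler0 addr0.
Qed.

Lemma psiM {R S : comPzRingType} (pi : {rmorphism R -> S}) {n p k}
  (tf : TF R) (p0 : (0 < p)%N) (hp : (p%:R : S) = 0) (k0 : (0 < k)%N)
  {A B : 'M[R]_n} :
  Gamma n p k A -> Gamma n p k B ->
  psi pi n p k (A *m B) = psi pi n p k A + psi pi n p k B.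
Proof.
move=> [_ [X eA]] [_ [Y eB]].
rewrite (psiE pi tf p0 eA) (psiE pi tf p0 eB).
rewrite (psiE pi tf p0 (B := X + Y + ((p ^ k)%N)%:R *: (X *m Y))).
  by rewrite !map_mxD map_mxZ pisc // scale0r addr0.
by rewrite eA eB mul_1a.
Qed.

Lemma psiAdj {R S : comPzRingType} (pi : {rmorphism R -> S}) {n p k}
  (tf : TF R) (p0 : (0 < p)%N) (hp : (p%:R : S) = 0) (k0 : (0 < k)%N)
  {A : 'M[R]_n} :
  Gamma n p k A -> psi pi n p k (\adj A) = - psi pi n p k A.
Proof.
move=> GA; have GA' := Gadj GA.
have := psiM pi tf p0 hp k0 GA' GA; rewrite mul_adj_mx (proj1 GA) psi1 // => e.
by apply/eqP; rewrite -addr_eq0 -e.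
Qed.

Lemma psiS {R S : comPzRingType} (pi : {rmorphism R -> S}) {n p k}
  (tf : TF R) (p0 : (0 < p)%N) (hp : (p%:R : S) = 0)
  {A : 'M[R]_n} : Gamma n p k.+1 A -> psi pi n p k A = 0.
Proof.
move=> [_ [X eA]].
by rewrite (psiE pi tf p0 (GSE eA)) map_mxZ rmorph_nat hp scale0r.
Qed.

Lemma psi0S {R S : comPzRingType} (pi : {rmorphism R -> S}) {n p k}
  (tf : TF R) (p0 : (0 < p)%N)
  (hpi : forall x : R, pi x = 0 -> exists y : R, x = p%:R * y)
  {A : 'M[R]_n} : Gamma n p k A -> psi pi n p k A = 0 -> Gamma n p k.+1 A.
Proof.
move=> [dA [X eA]]; rewrite (psiE pi tf p0 eA) => h0; split => //.
have hX : forall i j, exists y, X i j = p%:R * y.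
  move=> i j; apply: hpi.
  by have := congr1 (fun M : 'M[S]_n => M i j) h0; rewrite !mxE.
exists (\matrix_(i, j) epsilon (inhabits 0) (fun y => X i j = p%:R * y)).
rewrite eA; congr (_ + _); rewrite expnS natrM mulrC -scalerA; congr (_ *: _).
apply/matrixP => i j; rewrite !mxE.
exact: (epsilon_spec (inhabits 0) (fun y => X i j = p%:R * y) (hX i j)).
Qed.

Lemma psi_sl {R S : comPzRingType} (pi : {rmorphism R -> S}) {n p k}
  (tf : TF R) (p0 : (0 < p)%N) (hp : (p%:R : S) = 0) (k0 : (0 < k)%N)
  {A : 'M[R]_n} : Gamma n p k A -> sl n (psi pi n p k A).
Proof.
move=> [dA [X eA]]; rewrite /sl (psiE pi tf p0 eA) trace_map_mx.
have [y hy] := det_expand R n ((p ^ k)%N)%:R X.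
move: dA; rewrite eA hy => e.
have e2 : (\tr X + ((p ^ k)%N)%:R * y) *+ (p ^ k)%N = 0.
  apply: (addrI 1); rewrite addr0 -[RHS]e -[(_ + _) *+ _]mulr_natl.
  by rewrite mulrDr mulrA addrA.
have pk0 : (0 < p ^ k)%N by rewrite expn_gt0 p0.
move: (tf _ _ pk0 e2) => /eqP; rewrite addr_eq0 => /eqP ->.
by rewrite rmorphN rmorphM pisc // mul0r oppr0.
Qed.

Lemma map_adj1 {R S : comPzRingType} (pi : {rmorphism R -> S}) {n p k}
  (hp : (p%:R : S) = 0) (k0 : (0 < k)%N) {g : 'M[R]_n} :
  Gamma n p k g -> map_mx pi (\adj g) = 1%:M.
Proof.
move=> [dg [X eg]]; rewrite (adjE dg eg) map_mxD map_mx1 map_mxZ pisc //.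
by rewrite scale0r addr0.
Qed.

Lemma comm_swap {R : comPzRingType} {n} (a b : R) (X Y : 'M[R]_n) :
  (1%:M + a *: X) *m (1%:M + b *: Y) =
  (1%:M + b *: Y) *m (1%:M + a *: X) + (a * b) *: (X *m Y - Y *m X).
Proof.
rewrite !mulmxDl !mulmxDr !mul1mx !mulmx1 -!scalemxAl -!scalemxAr !scalerA.
rewrite scalerBr (mulrC b a).
move: (X *m Y) (Y *m X) => XY YX.
move: (a *: X) (b *: Y) ((a * b) *: XY) ((a * b) *: YX) => u v w z.
by rewrite [w - z]addrC !addrA addrK (addrAC 1%:M v u).
Qed.

Lemma comm_lemma {R S : comPzRingType} (pi : {rmorphism R -> S}) {n p s t}
  (tf : TF R) (p0 : (0 < p)%N) (hp : (p%:R : S) = 0)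
  (s0 : (0 < s)%N) (t0 : (0 < t)%N) {g h : 'M[R]_n} :
  Gamma n p s g -> Gamma n p t h ->
  Gamma n p (s + t) (mxcomm n g h) /\
  psi pi n p (s + t) (mxcomm n g h) =
    psi pi n p s g *m psi pi n p t h - psi pi n p t h *m psi pi n p s g.
Proof.
move=> Gg Gh; have Gg' := Gg; have Gh' := Gh.
move: Gg Gh => [dg [X eg]] [dh [Y eh]].
have key : mxcomm n g h = 1%:M + ((p ^ (s + t))%N)%:R *:
    ((\adj g *m \adj h) *m (X *m Y - Y *m X)).
  have E : g *m h = h *m g + (((p ^ s)%N)%:R * ((p ^ t)%N)%:R) *: (X *m Y - Y *m X).
    by rewrite {1 2}eg {1 2}eh comm_swap.
  rewrite /mxcomm -!mulmxA E mulmxDr mulmxDr !mulmxA.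
  rewrite -(mulmxA (\adj g) (\adj h) h) mul_adj_mx dh mulmx1 mul_adj_mx dg.
  by rewrite -!scalemxAr -natrM -expnD.
split.
  split; last by rewrite key; eexists.
  by rewrite /mxcomm !det_mulmx (det_adj1 dg) (det_adj1 dh) dg dh !mulr1.
rewrite (psiE pi tf p0 key) (psiE pi tf p0 eg) (psiE pi tf p0 eh).
by rewrite !map_mxM (map_adj1 pi hp s0 Gg') (map_adj1 pi hp t0 Gh') mulmx1 mul1mx map_mxB !map_mxM.
Qed.

Lemma det_elem_lt {R : comPzRingType} {n} (c : R) (i j : 'I_n) :
  (j < i)%N -> \det (1%:M + c *: delta_mx i j : 'M[R]_n) = 1.
Proof.
move=> hji; rewrite det_trig.
  rewrite big1 // => k _; rewrite !mxE eqxx.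
  have -> : ((k == i) && (k == j)) = false.
    by apply/negbTE; apply/andP => [[/eqP a /eqP b]]; move: hji; rewrite -a -b ltnn.
  by rewrite mulr0 addr0.
apply/forallP => k; apply/forallP => l; apply/implyP => hkl; rewrite !mxE.
have -> : (k == l) = false by apply/negbTE; rewrite neq_ltn hkl.
have -> : ((k == i) && (l == j)) = false.
  apply/negbTE; apply/andP => [[/eqP a /eqP b]]; move: hji hkl; rewrite -a -b.
  by move=> h1 h2; have := ltn_trans h1 h2; rewrite ltnn.
by rewrite mulr0 addr0.
Qed.

Lemma det_elem {R : comPzRingType} {n} (c : R) (i j : 'I_n) :
  i != j -> \det (1%:M + c *: delta_mx i j : 'M[R]_n) = 1.
Proof.
move=> hij; case: (ltngtP i j) => h.
- rewrite -det_tr raddfD /= linearZ /= trmx1 trmx_delta.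
  exact: det_elem_lt.
- exact: det_elem_lt.
- by move: hij; rewrite (val_inj h) eqxx.
Qed.

Lemma elem_prod {R : comPzRingType} {n} (c : R) (i j : 'I_n) : i != j ->
  (1%:M - delta_mx j i) *m (1%:M + c *: delta_mx i j) *m (1%:M + delta_mx j i) =
  1%:M + c *: (delta_mx i i + delta_mx i j - delta_mx j i - delta_mx j j) :> 'M[R]_n.
Proof.
move=> hij.
rewrite !(mulmxDl, mulmxBl, mulmxDr, mulmxBr, mul1mx, mulmx1).
rewrite ?mulNmx -?scalemxAl -?scalemxAr ?mulNmx.
rewrite ?mul_delta_mx ?(mul_delta_mx_0 _ _ _ hij) ?oppr0 ?scaleNr ?scaler0 ?mulNmx ?mul_delta_mx.
rewrite -?scalemxAl ?mul_delta_mx ?oppr0.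
apply/matrixP => k l; rewrite !mxE.
ring.
Qed.

Definition img {R S : comPzRingType} (pi : {rmorphism R -> S}) n p k
  (Y : 'M[S]_n) := exists A, Gamma n p k A /\ psi pi n p k A = Y.


Lemma img0 {R S : comPzRingType} (pi : {rmorphism R -> S}) {n p k}
  (tf : TF R) (p0 : (0 < p)%N) : img pi n p k 0.
Proof. by exists 1%:M; split; [exact: G1 | exact: psi1]. Qed.

Lemma imgD {R S : comPzRingType} (pi : {rmorphism R -> S}) {n p k}
  (tf : TF R) (p0 : (0 < p)%N) (hp : (p%:R : S) = 0) (k0 : (0 < k)%N) {Y1 Y2} :
  img pi n p k Y1 -> img pi n p k Y2 -> img pi n p k (Y1 + Y2).
Proof.
move=> [A [GA <-]] [B [GB <-]]; exists (A *m B); split; first exact: Gmul.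
exact: psiM.
Qed.

Lemma imgN {R S : comPzRingType} (pi : {rmorphism R -> S}) {n p k}
  (tf : TF R) (p0 : (0 < p)%N) (hp : (p%:R : S) = 0) (k0 : (0 < k)%N) {Y} :
  img pi n p k Y -> img pi n p k (- Y).
Proof.
move=> [A [GA <-]]; exists (\adj A); split; first exact: Gadj.
exact: psiAdj.
Qed.

Lemma img_off {R S : comPzRingType} (pi : {rmorphism R -> S}) {n p k}
  (tf : TF R) (p0 : (0 < p)%N) (hs : forall y : S, exists x : R, pi x = y)
  (x : S) (i j : 'I_n) : i != j -> img pi n p k (x *: delta_mx i j).
Proof.
move=> hij; have [x' hx'] := hs x.
exists (1%:M + ((p ^ k)%N)%:R *: (x' *: delta_mx i j)); split.
  by split; [rewrite scalerA det_elem | eexists].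
by rewrite (psiE pi tf p0 (erefl _)) map_mxZ map_delta_mx hx'.
Qed.

Lemma img_diag {R S : comPzRingType} (pi : {rmorphism R -> S}) {n p k}
  (tf : TF R) (p0 : (0 < p)%N) (hp : (p%:R : S) = 0) (k0 : (0 < k)%N)
  (hs : forall y : S, exists x : R, pi x = y)
  (x : S) (i j : 'I_n) : i != j ->
  img pi n p k (x *: (delta_mx i i - delta_mx j j)).
Proof.
move=> hij; have [x' hx'] := hs x.
have hN : img pi n p k
    (x *: (delta_mx i i + delta_mx i j - delta_mx j i - delta_mx j j)).
  exists (1%:M + ((p ^ k)%N)%:R *:
    (x' *: (delta_mx i i + delta_mx i j - delta_mx j i - delta_mx j j))); split.
    split; last by eexists.
    rewrite scalerA -elem_prod // !det_mulmx.
    have e1 : 1%:M - delta_mx j i = 1%:M + (-1) *: delta_mx j i :> 'M[R]_n.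
      by rewrite scaleN1r.
    have e2 : 1%:M + delta_mx j i = 1%:M + 1 *: delta_mx j i :> 'M[R]_n.
      by rewrite scale1r.
    have hji : j != i by rewrite eq_sym.
    by rewrite e1 e2 !det_elem // !mulr1.
  rewrite (psiE pi tf p0 (erefl _)) map_mxZ hx' !map_mxB map_mxD !map_delta_mx //.
have := imgD pi tf p0 hp k0 (imgD pi tf p0 hp k0 hN (imgN pi tf p0 hp k0
   (img_off pi tf p0 hs x i j hij))) (img_off pi tf p0 hs x j i _).
rewrite eq_sym hij => /(_ isT).
congr img.
rewrite -!scalerN -!scalerDr; congr (_ *: _).
move: (delta_mx i i) (delta_mx i j) (delta_mx j i) (delta_mx j j) => P E F Q.
by apply/matrixP => a b; rewrite !mxE; ring.
Qed.

Lemma lift {R S : comPzRingType} (pi : {rmorphism R -> S}) {n p k}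
  (tf : TF R) (p0 : (0 < p)%N) (hp : (p%:R : S) = 0) (k0 : (0 < k)%N)
  (hs : forall y : S, exists x : R, pi x = y) {Y : 'M[S]_n.+1} :
  sl n.+1 Y -> img pi n.+1 p k Y.
Proof.
move=> hY.
pose T (i j : 'I_n.+1) := if i == j then Y i i *: (delta_mx i i - delta_mx 0 0)
  else Y i j *: delta_mx i j.
have dec : Y = \sum_i \sum_j T i j.
  have row : forall i, \sum_j T i j = \sum_j Y i j *: delta_mx i j - Y i i *: delta_mx 0 0.
    move=> i; rewrite (bigD1 i) //= [in RHS](bigD1 i) //= /T eqxx scalerBr addrAC.
    congr (_ + _ - _); apply: eq_bigr => j hj; by rewrite eq_sym (negbTE hj).
  rewrite (eq_bigr _ (fun i _ => row i)) sumrB -scaler_suml.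
  have -> : \sum_i Y i i = 0 by exact: hY.
  by rewrite scale0r subr0 -matrix_sum_delta.
rewrite dec; apply: big_ind; first exact: img0.
  by move=> ? ?; apply: imgD.
move=> i _; apply: big_ind; first exact: img0.
  by move=> ? ?; apply: imgD.
move=> j _; rewrite /T; have [e|hij] := eqVneq i j.
  subst j.
  case: (eqVneq i 0) => [-> | hi0]; first by rewrite subrr scaler0; exact: img0.
  exact: img_diag.
exact: img_off.
Qed.

Lemma Ncomm_prop {R S : comPzRingType} (pi : {rmorphism R -> S}) {n p r}
  (tf : TF R) (p0 : (0 < p)%N) (hp : (p%:R : S) = 0) (r0 : (0 < r)%N)
  {A : 'M[R]_n} :
  Ncomm n p r A -> Gamma n p r A /\ bracket_span n (psi pi n p r A).
Proof.
rewrite /Ncomm => h; elim: h.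
- move=> B [hB | [s [g [h [hs hsr Gg Gh ->]]]]].
    by split; [exact: GS | rewrite (psiS pi tf p0 hp hB); exact: bs_zero].
  have t0 : (0 < r - s)%N by rewrite subn_gt0.
  have [G E] := comm_lemma pi tf p0 hp hs t0 Gg Gh.
  rewrite subnKC ?(ltnW hsr) // in G E.
  split => //; rewrite E; apply: bs_gen; exact: psi_sl.
- by split; [exact: G1 | rewrite psi1 //; exact: bs_zero].
- move=> B C _ [GB bB] _ [GC bC]; split; first exact: Gmul.
  by rewrite psiM //; exact: bs_add.
- move=> B _ [GB bB]; split; first exact: Gadj.
  by rewrite psiAdj //; exact: bs_opp.
Qed.

Lemma bs_lift {R S : comPzRingType} (pi : {rmorphism R -> S}) {n p r}
  (tf : TF R) (p0 : (0 < p)%N) (hp : (p%:R : S) = 0) (r1 : (1 < r)%N)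
  (hs : forall y : S, exists x : R, pi x = y) {Z : 'M[S]_n.+1} :
  bracket_span n.+1 Z -> exists c, Ncomm n.+1 p r c /\ psi pi n.+1 p r c = Z.
Proof.
have r0 : (0 < r)%N by apply: ltnW.
elim.
- move=> X Y sX sY.
  have [g [Gg <-]] := lift pi tf p0 hp (isT : (0 < 1)%N) hs sX.
  have t0 : (0 < r - 1)%N by rewrite subn_gt0.
  have [h [Gh <-]] := lift pi tf p0 hp t0 hs sY.
  exists (mxcomm n.+1 g h); split.
    by apply: gs_gen; right; exists 1%N, g, h; split.
  have [_ E] := comm_lemma pi tf p0 hp (isT : (0 < 1)%N) t0 Gg Gh.
  by rewrite subnKC // in E.
- by exists 1%:M; split; [exact: gs_one | exact: psi1].
- move=> A B _ [c1 [N1 <-]] _ [c2 [N2 <-]]; exists (c1 *m c2); split.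
    exact: gs_mul.
  by rewrite psiM //; [exact: (Ncomm_prop pi tf p0 hp r0 N1).1 | exact: (Ncomm_prop pi tf p0 hp r0 N2).1].
- move=> A _ [c [N1 <-]]; exists (\adj c); split; first exact: gs_inv.
  by rewrite psiAdj //; exact: (Ncomm_prop pi tf p0 hp r0 N1).1.
Qed.

Theorem corollary2p5 (R : comPzRingType) (V : R -> Prop) (n p : nat)
  (S : comPzRingType) (pi : {rmorphism R -> S}) :
  Zbasis V -> (2 <= n)%N -> prime p ->
  (* S together with pi is F_p[V] = R/pR *)
  (forall y : S, exists x : R, pi x = y) ->
  (forall x : R, pi x = 0 <-> exists y : R, x = p%:R * y) ->
  (* degree 1: H_1(gr)_1 = Gamma_1/Gamma_2 ~= g = sl_n(F_p[V]) *)
  (exists phi : 'M[R]_n -> 'M[S]_n,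
      gr_H1_piece_iso n p 1 'M[S]_n (sl n) phi) /\
  (* degree r >= 2: H_1(gr)_r ~= H_1(g) *)
  (forall r : nat, (2 <= r)%N ->
   forall (Q : zmodType) (q : 'M[S]_n -> Q), H1_sl_presentation n Q q ->
   exists phi : 'M[R]_n -> Q, gr_H1_piece_iso n p r Q (fun _ => True) phi).
Proof.
move=> hV hn hprime hs hker.
have p0 : (0 < p)%N by exact: prime_gt0.
have tf : TF R := fun m x m0 hx => torsion_free R V m x hV m0 hx.
have hp : (p%:R : S) = 0.
  by rewrite -(rmorph_nat pi); apply/hker; exists 1; rewrite mulr1.
have hpi : forall x, pi x = 0 -> exists y, x = p%:R * y := fun x h => proj1 (hker x) h.
case: n hn => [//|n] hn.
split.
- exists (psi pi n.+1 p 1); split.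
  + by move=> x Gx; exact: psi_sl.
  + by move=> x y Gx Gy; exact: psiM.
  + by move=> y hy; exact: lift.
  + move=> x Gx; split.
      by move=> h0; apply: gs_gen => /=; left; exact: (psi0S pi tf p0 hpi Gx h0).
    move=> hN; apply: (psiS pi tf p0 hp).
    rewrite /Ncomm in hN; elim: hN.
    * move=> B [hB | [s [g [h [hs1 hsr _ _ _]]]]] //.
      by move: (leq_trans hs1 hsr); rewrite ltnn.
    * exact: G1.
    * by move=> B C _ GB _ GC; exact: Gmul.
    * by move=> B _ GB; exact: Gadj.
- move=> r hr Q q [qadd qsurj qker].
  have r1 : (1 < r)%N by [].
  have r0 : (0 < r)%N by apply: ltnW.
  exists (fun A => q (psi pi n.+1 p r A)); split.
  + by [].
  + move=> x y Gx Gy /=; rewrite psiM // qadd //; exact: psi_sl.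
  + move=> y _; have [A [sA <-]] := qsurj y.
    have [x [Gx <-]] := lift pi tf p0 hp r0 hs sA; by exists x.
  + move=> x Gx /=; split.
      move=> hq; have bs := (qker _ (psi_sl pi tf p0 hp r0 Gx)).1 hq.
      have [c [Nc pc]] := bs_lift pi tf p0 hp r1 hs bs.
      have Gc := (Ncomm_prop pi tf p0 hp r0 Nc).1.
      have G2 : Gamma n.+1 p r (\adj c *m x) := Gmul (Gadj Gc) Gx.
      have G3 : Gamma n.+1 p r.+1 (\adj c *m x).
        apply: (psi0S pi tf p0 hpi G2).
        by rewrite psiM // ?psiAdj // ?pc ?addNr //; exact: Gadj.
      have -> : x = c *m (\adj c *m x) by rewrite mulmxA mul_mx_adj (proj1 Gc) mul1mx.
      by apply: gs_mul => //; apply: gs_gen => /=; left.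
    move=> hN; apply/(qker _ (psi_sl pi tf p0 hp r0 Gx)).
    exact: (Ncomm_prop pi tf p0 hp r0 hN).2.
Qed.
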